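(* Let $V,V'$ be finite-dimensional $\mathfrak l_m$-modules on which $E_x$ acts by scalars $c$ and $c'$ respectively. Then $\mathrm{Hom}_{\mathfrak b_m}(\mathcal F(V),\mathcal F(V'))=0$ unless $c'-c\in\mathbb N$, and if $c'-c\in\mathbb N$ it is isomorphic to the space of $\mathfrak l_m$-invariants $\bigl[\mathbb C[\partial_x]_{(c-c')}\otimes\mathrm{Hom}(V,V')\bigr]^{\mathfrak l_m}$, where $\mathbb C[\partial_x]_{(c-c')}$ denotes the homogeneous polynomials of degree $c'-c$ in $\partial_{x_1},\dots,\partial_{x_m}$.
   Context: $\mathrm{Vec}\,\mathbb R^m$ is the Lie algebra of complex polynomial vector fields on $\mathbb R^m$; $E_x=\sum_r x_r\partial_{x_r}$; $\mathfrak b_m=\mathrm{Span}\{\partial_{x_i},x_j\partial_{x_i}\}$, $\mathfrak l_m=\mathrm{Span}\{x_j\partial_{x_i}\}$. For a finite-dimensional $\mathfrak l_m$-representation $(\phi,V)$, $\mathcal F(V)=\mathbb C[x]\otimes V$ with $\mathrm{Lie}_\phi(X)h=\sum_jX_j\partial_{x_j}h+\sum_{i,j}(\partial_{x_i}X_j)\phi(x_i\partial_{x_j})h$. The algebra $\mathbb C[\partial_x]$ of constant-coefficient differential operators is an $\mathfrak l_m$-module via commutators, $\mathrm{Hom}(V,V')$ via $Y\cdot\tau=\phi'(Y)\tau-\tau\phi(Y)$, and their tensor product via the diagonal action. *)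

(* Defs.v *)
From HB Require Import structures.
From mathcomp Require Import all_boot all_order all_algebra.
Set Implicit Arguments. Unset Strict Implicit. Unset Printing Implicit Defensive.
Import GRing.Theory Num.Theory.
Local Open Scope ring_scope.

(* Multi-indices (exponent vectors) for monomials in m variables:
   x^e = prod_k x_k^(e k), resp. \partial^e = prod_k \partial_{x_k}^(e k). *)
Definition exps (m : nat) := {ffun 'I_m -> nat}.
Definition inc m (i : 'I_m) (e : exps m) : exps m := [ffun k => (e k + (k == i))%N].
Definition dec m (i : 'I_m) (e : exps m) : exps m := [ffun k => (e k - (k == i))%N].
Definition deg m (e : exps m) : nat := (\sum_(k < m) e k)%N.

(* An l_m-representation on V = C^n (column vectors), given on the basis:
   phi i j = phi(x_i \partial_{x_j}); condition: phi is a Lie algebra map, with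
   [x_i d_j, x_k d_l] = delta_{jk} x_i d_l - delta_{li} x_k d_j. *)
Definition is_lm_rep (C : fieldType) m n (phi : 'I_m -> 'I_m -> 'M[C]_n) : Prop :=
  forall i j k l : 'I_m,
    phi i j *m phi k l - phi k l *m phi i j
    = (j == k)%:R *: phi i l - (l == i)%:R *: phi k j.

(* F(V) = C[x] (x) V : an element h is its coefficient function e |-> coefficient
   of x^e (a vector of V), required to have finite support. *)
Definition fsupp (C : fieldType) m n (f : exps m -> 'cV[C]_n) : Prop :=
  exists s : seq (exps m), forall e, f e != 0 -> e \in s.

Definition dx (C : fieldType) m n (j : 'I_m) (h : exps m -> 'cV[C]_n)
  : exps m -> 'cV[C]_n :=
  fun e => (e j).+1%:R *: h (inc j e).

Definition mulx (C : fieldType) m n (i : 'I_m) (h : exps m -> 'cV[C]_n)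
  : exps m -> 'cV[C]_n :=
  fun e => if (0 < e i)%N then h (dec i e) else 0.

(* Lie_phi(\partial_{x_k}) = \partial_{x_k};
   Lie_phi(x_i \partial_{x_j}) h = x_i \partial_{x_j} h + phi(x_i \partial_{x_j}) h *)
Definition lie_xd (C : fieldType) m n (phi : 'I_m -> 'I_m -> 'M[C]_n)
  (i j : 'I_m) (h : exps m -> 'cV[C]_n) : exps m -> 'cV[C]_n :=
  fun e => mulx i (dx j h) e + phi i j *m h e.

(* T : F(V) -> F(V') is a b_m-module homomorphism (C-linear, commuting with the
   actions of the basis \partial_{x_k}, x_i \partial_{x_j} of b_m).  T is given on
   all coefficient functions, but only its restriction to F(V) matters. *)
Definition is_bhom (C : fieldType) m n n'
  (phi : 'I_m -> 'I_m -> 'M[C]_n) (phi' : 'I_m -> 'I_m -> 'M[C]_n')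
  (T : (exps m -> 'cV[C]_n) -> (exps m -> 'cV[C]_n')) : Prop :=
  [/\ forall f, fsupp f -> fsupp (T f),
      forall (a : C) f g, fsupp f -> fsupp g ->
        forall e, T (fun e0 => a *: f e0 + g e0) e = a *: T f e + T g e,
      forall k f, fsupp f -> forall e, T (dx k f) e = dx k (T f) e
    & forall i j f, fsupp f -> forall e, T (lie_xd phi i j f) e = lie_xd phi' i j (T f) e].

(* Elements of C[\partial_x] (x) W, W a vector space, as coefficient functions
   t : exps m -> W (t a = coefficient of \partial^a).  Action of x_i \partial_{x_j}
   on C[\partial_x] by commutators: [x_i d_j, \partial^a] = - a_i \partial^(a - e_i + e_j);
   hence the coefficient of \partial^b in (x_i d_j) . t is as below. *)
Definition dop_act (C : fieldType) (W : lmodType C) m (i j : 'I_m)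
  (t : exps m -> W) : exps m -> W :=
  fun b => - (if (0 < b j)%N then (dec j b i).+1%:R *: t (inc i (dec j b)) else 0).

Definition hom_act (C : fieldType) m n n'
  (phi : 'I_m -> 'I_m -> 'M[C]_n) (phi' : 'I_m -> 'I_m -> 'M[C]_n')
  (i j : 'I_m) (tau : 'M[C]_(n', n)) : 'M[C]_(n', n) :=
  phi' i j *m tau - tau *m phi i j.

Definition tensor_act (C : fieldType) m n n'
  (phi : 'I_m -> 'I_m -> 'M[C]_n) (phi' : 'I_m -> 'I_m -> 'M[C]_n')
  (i j : 'I_m) (t : exps m -> 'M[C]_(n', n)) : exps m -> 'M[C]_(n', n) :=
  fun b => dop_act i j t b + hom_act phi phi' i j (t b).

Definition is_invariant (C : fieldType) m n n'
  (phi : 'I_m -> 'I_m -> 'M[C]_n) (phi' : 'I_m -> 'I_m -> 'M[C]_n')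
  (d : nat) (t : exps m -> 'M[C]_(n', n)) : Prop :=
  (forall a, deg a != d -> t a = 0) /\
  (forall i j b, tensor_act phi phi' i j t b = 0).

(* Main.v *)
Require Import Defs.
From HB Require Import structures.
From mathcomp Require Import all_boot all_order all_algebra.
From mathcomp Require Import ring zify.
From Stdlib Require Import FunctionalExtensionality.
Import GRing.Theory Num.Theory.
Local Open Scope ring_scope.
Set Implicit Arguments. Unset Strict Implicit. Unset Printing Implicit Defensive.

Section Exps.
Variable m : nat.
Implicit Types (e a b x : exps m) (i j k : 'I_m).

Definition ez : exps m := [ffun _ => 0%N].
Definition eadd e a : exps m := [ffun k => (e k + a k)%N].
Definition esub e a : exps m := [ffun k => (e k - a k)%N].
Definition fct e : nat := (\prod_(k < m) (e k)`!)%N.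

Lemma incE i e k : inc i e k = (e k + (k == i))%N.
Proof. by rewrite /inc ffunE. Qed.
Lemma decE i e k : dec i e k = (e k - (k == i))%N.
Proof. by rewrite /dec ffunE. Qed.

Lemma dec_inc i e : dec i (inc i e) = e.
Proof. by apply/ffunP=> k; rewrite decE incE addnK. Qed.

Lemma inc_dec i e : (0 < e i)%N -> inc i (dec i e) = e.
Proof.
move=> h; apply/ffunP=> k; rewrite incE decE.
case: eqP=> [->|_]; last by rewrite subn0 addn0.
by rewrite subnK.
Qed.

Lemma inc_inj i : injective (inc i).
Proof. by move=> x y h; rewrite -(dec_inc i x) h dec_inc. Qed.

Lemma inc_pos i e : (0 < inc i e i)%N.
Proof. by rewrite incE eqxx addn1. Qed.

Lemma deg_inc i e : deg (inc i e) = (deg e).+1.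
Proof.
rewrite /deg (bigD1 i) //= [in RHS](bigD1 i) //= incE eqxx addn1 addSn; congr (_ + _).+1.
by apply: eq_bigr=> k /negbTE hk; rewrite incE hk addn0.
Qed.

Lemma deg_dec i e : (0 < e i)%N -> deg e = (deg (dec i e)).+1.
Proof. by move=> h; rewrite -(deg_inc i) inc_dec. Qed.

Lemma le_deg e k : (e k <= deg e)%N.
Proof. by rewrite /deg (bigD1 k) //= leq_addr. Qed.

Lemma deg0 e : deg e = 0%N -> e = ez.
Proof.
move=> h; apply/ffunP=> k; rewrite ffunE; apply/eqP; rewrite -leqn0 -h; exact: le_deg.
Qed.

Lemma fct_inc i e : fct (inc i e) = (fct e * (e i).+1)%N.
Proof.
rewrite /fct (bigD1 i) //= [in RHS](bigD1 i) //= incE eqxx addn1 factS.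
have -> : (\prod_(k < m | k != i) (inc i e k)`!)%N = (\prod_(k < m | k != i) (e k)`!)%N.
  by apply: eq_bigr=> k /negbTE hk; rewrite incE hk addn0.
by ring.
Qed.

Lemma fct_gt0 e : (0 < fct e)%N.
Proof. by rewrite /fct prodn_gt0 // => k; rewrite fact_gt0. Qed.

Lemma fct_ez : fct ez = 1%N.
Proof. by rewrite /fct big1 // => k _; rewrite ffunE. Qed.

Lemma eadd_ez a : eadd ez a = a.
Proof. by apply/ffunP=> k; rewrite !ffunE. Qed.

Lemma inc_eadd k e a : inc k (eadd e a) = eadd (inc k e) a.
Proof. by apply/ffunP=> k'; rewrite !(incE, ffunE) addnAC. Qed.

Lemma esub_eadd e a : esub (eadd e a) a = e.
Proof. by apply/ffunP=> k; rewrite !ffunE addnK. Qed.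

Definition box (d : nat) : seq (exps m) :=
  [seq [ffun k => nat_of_ord (y k)] | y : {ffun 'I_m -> 'I_d.+1} <- enum {ffun 'I_m -> 'I_d.+1}].
Definition Sd (d : nat) : seq (exps m) := [seq a <- undup (box d) | deg a == d].

Lemma Sd_uniq d : uniq (Sd d).
Proof. by rewrite filter_uniq // undup_uniq. Qed.

Lemma mem_Sd d a : (a \in Sd d) = (deg a == d).
Proof.
rewrite mem_filter mem_undup; case: eqP=> //= h.
apply/mapP; exists [ffun k => (inord (a k) : 'I_d.+1)]; first by rewrite mem_enum.
apply/ffunP=> k; rewrite !ffunE inordK // ltnS -h; exact: le_deg.
Qed.

End Exps.

Lemma sum_pick (V : zmodType) (T : eqType) (s : seq T) b (F : T -> V) :
  uniq s -> \sum_(a <- s) (if a == b then F a else 0) = if b \in s then F b else 0.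
Proof.
elim: s=> [|x s IH] /=; first by rewrite big_nil.
case/andP=> hx hs; rewrite big_cons IH // in_cons.
case: (eqVneq x b)=> [hxb|hxb] /=.
  by subst x; rewrite (negbTE hx) addr0.
by rewrite add0r.
Qed.

Lemma sum_supp (V : zmodType) (T : eqType) (s1 s2 : seq T) (F : T -> V) :
  uniq s1 -> uniq s2 -> (forall a, F a != 0 -> a \in s1) ->
  (forall a, F a != 0 -> a \in s2) ->
  \sum_(a <- s1) F a = \sum_(a <- s2) F a.
Proof.
move=> u1 u2 h1 h2.
rewrite (bigID (fun a => a \in s2)) /= [X in _ + X]big1; last first.
  by move=> a ha; apply/eqP; apply: contraR ha; apply: h2.
rewrite addr0 [RHS](bigID (fun a => a \in s1)) /= [X in _ + X]big1; last first.
  by move=> a ha; apply/eqP; apply: contraR ha; apply: h1.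
rewrite addr0 -big_filter -[RHS]big_filter.
apply: perm_big; apply: uniq_perm; rewrite ?filter_uniq //.
by move=> a; rewrite !mem_filter andbC.
Qed.

Section Fsupp.
Variables (C : fieldType) (m n : nat).
Implicit Types (f g : exps m -> 'cV[C]_n).

Lemma fsupp_map (h : exps m -> exps m) (n0 n2 : nat) (f : exps m -> 'cV[C]_n0) (g : exps m -> 'cV[C]_n2) :
  fsupp f -> (forall e, g e != 0 -> exists2 e', f e' != 0 & e = h e') -> fsupp g.
Proof.
case=> s hs H; exists (map h s)=> e /H [e' /hs he' ->]; exact: map_f.
Qed.

Lemma fsupp_sub (n0 n2 : nat) (f : exps m -> 'cV[C]_n0) (g : exps m -> 'cV[C]_n2) :
  fsupp f -> (forall e, g e != 0 -> f e != 0) -> fsupp g.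
Proof. by move=> hf H; apply: (fsupp_map (h := id) hf)=> e /H; exists e. Qed.

Lemma fsupp0 : fsupp (fun _ : exps m => (0 : 'cV[C]_n)).
Proof. by exists [::]=> e; rewrite eqxx. Qed.

Lemma fsupp_add f g : fsupp f -> fsupp g -> fsupp (fun e => f e + g e).
Proof.
case=> s1 h1 [s2 h2]; exists (s1 ++ s2)=> e he; rewrite mem_cat.
case: (eqVneq (f e) 0)=> [h0|/h1 -> //]; apply/orP; right; apply: h2.
by move: he; rewrite h0 add0r.
Qed.

Lemma fsupp_scale c f : fsupp f -> fsupp (fun e => c *: f e).
Proof.
move=> hf; apply: (fsupp_sub hf)=> e; apply: contra=> /eqP ->; by rewrite scaler0.
Qed.

Lemma fsupp_lin c f g : fsupp f -> fsupp g -> fsupp (fun e => c *: f e + g e).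
Proof. by move=> hf hg; apply: fsupp_add=> //; apply: fsupp_scale. Qed.

Lemma fsupp_mul (n1 : nat) (M : 'M[C]_(n1, n)) f : fsupp f -> fsupp (fun e => M *m f e).
Proof.
move=> hf; apply: (fsupp_sub hf)=> e; apply: contra=> /eqP ->; by rewrite mulmx0.
Qed.

Lemma fsupp_sum (I : Type) (l : seq I) (F : I -> exps m -> 'cV[C]_n) :
  (forall x, fsupp (F x)) -> fsupp (fun e => \sum_(x <- l) F x e).
Proof.
move=> hF; elim: l=> [|x l IH].
  by apply: (fsupp_sub fsupp0)=> e; rewrite big_nil.
apply: (fsupp_sub (fsupp_add (hF x) IH))=> e; by rewrite big_cons.
Qed.

Definition mono (a : exps m) (v : 'cV[C]_n) : exps m -> 'cV[C]_n :=
  fun e => if e == a then v else 0.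

Lemma fsupp_mono a v : fsupp (mono a v).
Proof. by exists [:: a]=> e; rewrite /mono inE; case: (e == a)=> //; rewrite eqxx. Qed.

Lemma fsupp_dx k f : fsupp f -> fsupp (dx k f).
Proof.
move=> hf; apply: (fsupp_map (h := dec k) hf)=> e he; exists (inc k e).
  by apply: contra he=> /eqP; rewrite /dx=> ->; rewrite scaler0.
by rewrite dec_inc.
Qed.

Lemma fsupp_mulx i f : fsupp f -> fsupp (mulx i f).
Proof.
move=> hf; apply: (fsupp_map (h := inc i) hf)=> e; rewrite /mulx.
by case: ifP=> [h he|]; [exists (dec i e); rewrite ?inc_dec|rewrite eqxx].
Qed.

Lemma fsupp_lie (phi : 'I_m -> 'I_m -> 'M[C]_n) i j f : fsupp f -> fsupp (lie_xd phi i j f).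
Proof.
by move=> hf; apply: fsupp_add; [apply/fsupp_mulx/fsupp_dx|apply: fsupp_mul].
Qed.

End Fsupp.

Section TLin.
Variables (C : fieldType) (m n n' : nat).
Variable T : (exps m -> 'cV[C]_n) -> exps m -> 'cV[C]_n'.
Hypothesis HL : forall (a : C) f g, fsupp f -> fsupp g ->
  forall e, T (fun e0 => a *: f e0 + g e0) e = a *: T f e + T g e.

Lemma T0 e : T (fun _ => 0) e = 0.
Proof.
have := HL 1 (@fsupp0 C m n) (@fsupp0 C m n) e.
have -> : (fun e0 : exps m => 1 *: (0 : 'cV[C]_n) + 0) = fun _ => 0.
  by apply: functional_extensionality=> ?; rewrite scale1r addr0.
rewrite scale1r => /esym /eqP; rewrite -subr_eq0 addrK => /eqP //.
Qed.

Lemma Tsum (I : Type) (l : seq I) (c : I -> C) (F : I -> exps m -> 'cV[C]_n) :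
  (forall x, fsupp (F x)) ->
  forall e, T (fun e0 => \sum_(x <- l) c x *: F x e0) e = \sum_(x <- l) c x *: T (F x) e.
Proof.
move=> hF e; elim: l=> [|x l IH].
  rewrite big_nil -(T0 e); congr (T _ e).
  by apply: functional_extensionality=> ?; rewrite big_nil.
rewrite big_cons -IH -HL //; last first.
  by apply: fsupp_sum=> y; apply: fsupp_scale.
by congr (T _ e); apply: functional_extensionality=> ?; rewrite big_cons.
Qed.

Lemma Tdecomp g : fsupp g -> exists s, [/\ uniq s, (forall a, g a != 0 -> a \in s) &
  forall e, T g e = \sum_(a <- s) T (mono a (g a)) e].
Proof.
case=> s0 hs0; exists (undup s0); split; first exact: undup_uniq.
  by move=> a /hs0; rewrite mem_undup.
move=> e.
have E : g = fun e0 => \sum_(a <- undup s0) 1 *: mono a (g a) e0.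
  apply: functional_extensionality=> e0.
  under eq_bigr do rewrite scale1r /mono eq_sym.
  rewrite (sum_pick _ (fun a => g a)) ?undup_uniq // mem_undup.
  by case: ifP=> // h; apply/eqP; apply: contraFT h=> /hs0.
rewrite {1}E Tsum; last by move=> a; apply: fsupp_mono.
by apply: eq_bigr=> a _; rewrite scale1r.
Qed.

End TLin.

Section Vanish.
Variables (C : numFieldType) (m n n' : nat).
Variable U : (exps m -> 'cV[C]_n) -> exps m -> 'cV[C]_n'.

Lemma vanish :
  (forall k g, fsupp g -> forall e, U (dx k g) e = dx k (U g) e) ->
  (forall g, fsupp g -> U g (ez m) = 0) ->
  forall g, fsupp g -> forall e, U g e = 0.
Proof.
move=> Hc H0 g hg e.
move: {2}(deg e) (erefl (deg e)) => N; elim: N g hg e=> [|N IH] g hg e hN.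
  by rewrite (deg0 hN) H0.
have [k hk] : exists k, (0 < e k)%N.
  apply/existsP; apply: contraT; rewrite negb_exists=> /forallP h.
  have : e = ez m by apply/ffunP=> k; rewrite ffunE; apply/eqP; rewrite -leqn0 leqNgt h.
  by move=> he; move: hN; rewrite he /deg big1 // => k _; rewrite ffunE.
have := Hc k g hg (dec k e).
rewrite (IH (dx k g) (fsupp_dx k hg)); last first.
  by move: hN; rewrite (deg_dec hk)=> -[].
rewrite /dx inc_dec // decE eqxx subn1 prednK // => /esym /eqP.
by rewrite scaler_eq0 pnatr_eq0 (negbTE (lt0n_neq0 hk)) => /eqP.
Qed.

End Vanish.

Lemma inc_comm m (i j : 'I_m) x : inc i (inc j x) = inc j (inc i x).
Proof. by apply/ffunP=> k; rewrite !incE addnAC. Qed.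

Lemma dec_inc_comm m (i k : 'I_m) e : k != i -> dec i (inc k e) = inc k (dec i e).
Proof.
move=> hki; apply/ffunP=> k'; rewrite !(incE, decE).
case: (eqVneq k' i)=> [->|]; last by rewrite !subn0.
by rewrite [i == k]eq_sym (negbTE hki) !addn0.
Qed.

Lemma mem_decS m d (i : 'I_m) (x : exps m) :
  (x \in map (dec i) [seq a : exps m <- @Sd m d | (0 < a i)%N]) = ((deg x).+1 == d).
Proof.
apply/mapP/idP=> [[a]|hx].
  by rewrite mem_filter mem_Sd=> /andP[ha /eqP <-] ->; rewrite (deg_dec ha).
exists (inc i x); last by rewrite dec_inc.
by rewrite mem_filter mem_Sd inc_pos deg_inc.
Qed.

Lemma reindex_dec (V : zmodType) m d (i j : 'I_m) (G : exps m -> V) :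
  \sum_(a <- @Sd m d | (0 < a i)%N) G (dec i a) = \sum_(b <- @Sd m d | (0 < b j)%N) G (dec j b).
Proof.
rewrite -big_filter -[RHS]big_filter -(big_map (dec i) xpredT G) -(big_map (dec j) xpredT G).
apply: perm_big; apply: uniq_perm.
- rewrite map_inj_in_uniq ?filter_uniq ?Sd_uniq ?undup_uniq // => a b.
  rewrite !mem_filter=> /andP[ha _] /andP[hb _] h.
  by rewrite -(inc_dec ha) h inc_dec.
- rewrite map_inj_in_uniq ?filter_uniq ?Sd_uniq ?undup_uniq // => a b.
  rewrite !mem_filter=> /andP[ha _] /andP[hb _] h.
  by rewrite -(inc_dec ha) h inc_dec.
by move=> x; rewrite !mem_decS.
Qed.

Lemma dx_lie (C : fieldType) m n0 (ph : 'I_m -> 'I_m -> 'M[C]_n0) (i j k : 'I_m)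
  (h : exps m -> 'cV[C]_n0) e :
  dx k (lie_xd ph i j h) e = lie_xd ph i j (dx k h) e + (k == i)%:R *: dx j h e.
Proof.
rewrite /lie_xd /dx /mulx scalerDr scalemxAr [in RHS]addrAC; congr (_ + _).
case: (eqVneq k i) => [->|hki].
  rewrite inc_pos dec_inc scale1r; case: (posnP (e i)) => [h0|hpos].
    by rewrite h0 scale1r add0r.
  rewrite inc_comm inc_dec // !scalerA -scalerDl -!natrM -natrD.
  congr (_%:R *: _); rewrite !(incE, decE).
  case: (eqVneq j i) => [->|hji]; rewrite ?eqxx /=.
    nia.
  nia.
rewrite (_ : false%:R = 0) // scale0r addr0 incE [i == k]eq_sym (negbTE hki) addn0.
case: (posnP (e i)) => [h0|hpos]; first by rewrite /= scaler0.
rewrite dec_inc_comm // [inc j (inc k _)]inc_comm !scalerA -!natrM.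
congr (_%:R *: _); rewrite !(incE, decE) (negbTE hki).
case: (eqVneq j k) => [->|hjk]; rewrite ?eqxx /=.
  rewrite (negbTE hki) /=; nia.
case: (j == i) => /=; nia.
Qed.

Section PhiSec.
Variables (C : numFieldType) (m n n' d : nat).

Definition Phi (t : exps m -> 'M[C]_(n', n)) (f : exps m -> 'cV[C]_n) (e : exps m)
  : 'cV[C]_n' :=
  \sum_(a <- @Sd m d) (((fct (eadd e a))%:R / (fct e)%:R) *: (t a *m f (eadd e a))).

Lemma Phi_linf t (c : C) f g e :
  Phi t (fun e0 => c *: f e0 + g e0) e = c *: Phi t f e + Phi t g e.
Proof.
rewrite /Phi scaler_sumr -big_split; apply: eq_bigr=> a _.
by rewrite mulmxDr -scalemxAr scalerDr !scalerA mulrC.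
Qed.

Lemma Phi_lint (c : C) t1 t2 f e :
  Phi (fun b => c *: t1 b + t2 b) f e = c *: Phi t1 f e + Phi t2 f e.
Proof.
rewrite /Phi scaler_sumr -big_split; apply: eq_bigr=> a _.
by rewrite mulmxDl -scalemxAl scalerDr !scalerA mulrC.
Qed.

Lemma Phi_z t f : Phi t f (ez m) = \sum_(a <- @Sd m d) (fct a)%:R *: (t a *m f a).
Proof.
by apply: eq_bigr=> a _; rewrite eadd_ez fct_ez divr1.
Qed.

Lemma fct_neq0 (e : exps m) : (fct e)%:R != 0 :> C.
Proof. by rewrite pnatr_eq0 -lt0n fct_gt0. Qed.

Lemma Phi_dx t k f e : Phi t (dx k f) e = dx k (Phi t f) e.
Proof.
rewrite /Phi /dx scaler_sumr; apply: eq_bigr=> a _.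
rewrite -scalemxAr !scalerA inc_eadd; congr (_ *: _).
rewrite -inc_eadd !fct_inc !natrM.
have h1 := fct_neq0 e.
have h2 : (e k).+1%:R != 0 :> C by rewrite pnatr_eq0.
move: ((fct (eadd e a))%:R : C) ((eadd e a k).+1%:R : C) => X Y.
move: ((fct e)%:R : C) ((e k).+1%:R : C) h1 h2 => Z W h1 h2.
by field; rewrite h1 h2.
Qed.

Lemma Phi_fsupp t f : fsupp f -> fsupp (Phi t f).
Proof.
case=> s hs; exists [seq esub u a | u <- s, a <- @Sd m d] => e he.
have : ~~ all (fun a => f (eadd e a) == 0) (@Sd m d).
  apply: contra he=> /allP h; rewrite /Phi big1_seq //= => a /h /eqP ->.
  by rewrite mulmx0 scaler0.
rewrite -has_predC=> /hasP [a ha hfa].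
by rewrite -(esub_eadd e a); apply: allpairs_f=> //; apply: hs.
Qed.

Lemma Phi_mono0 t b v :
  Phi t (mono b v) (ez m) = if deg b == d then (fct b)%:R *: (t b *m v) else 0.
Proof.
rewrite Phi_z -mem_Sd.
rewrite -(sum_pick _ (fun a => (fct a)%:R *: (t a *m v)) (@Sd_uniq m d)).
apply: eq_bigr=> a _; rewrite /mono.
by case: ifP=> _; rewrite ?mulmx0 ?scaler0.
Qed.

End PhiSec.

Lemma zmod_id (V : zmodType) (x a b : V) : (- x + a) - b = a - (b + x).
Proof. by rewrite opprD addrA addrAC [_ + a]addrC. Qed.

Section PhiLie.
Variables (C : numFieldType) (m n n' d : nat).
Variables (phi : 'I_m -> 'I_m -> 'M[C]_n) (phi' : 'I_m -> 'I_m -> 'M[C]_n').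
Variable t : exps m -> 'M[C]_(n', n).
Hypothesis Hinv : forall i j b, tensor_act phi phi' i j t b = 0.

Lemma inv_eq i j b : phi' i j *m t b = t b *m phi i j +
  (if (0 < b j)%N then (dec j b i).+1%:R *: t (inc i (dec j b)) else 0).
Proof.
have := Hinv i j b; rewrite /tensor_act /dop_act /hom_act addrC => /eqP.
by rewrite subr_eq0 subr_eq addrC => /eqP.
Qed.

Lemma Phi_lie_z i j g :
  Phi d t (lie_xd phi i j g) (ez m) = lie_xd phi' i j (Phi d t g) (ez m).
Proof.
rewrite {2}/lie_xd {1}/mulx ffunE /= add0r !Phi_z mulmx_sumr.
pose G x := ((fct x)%:R * (x i).+1%:R * (x j).+1%:R) *: (t (inc i x) *m g (inc j x)).
transitivity (\sum_(a <- @Sd m d) ((if (0 < a i)%N then G (dec i a) else 0)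
   + (fct a)%:R *: (t a *m phi i j *m g a))).
  apply: eq_bigr=> a _; rewrite /lie_xd mulmxDr scalerDr mulmxA; congr (_ + _).
  rewrite /mulx /dx; case: ifP=> h; last by rewrite mulmx0 scaler0.
  have hx := inc_dec h; move: (dec i a) hx => x hx; rewrite -hx /G.
  by rewrite fct_inc natrM -scalemxAr scalerA.
transitivity (\sum_(a <- @Sd m d) ((if (0 < a j)%N then G (dec j a) else 0)
   + (fct a)%:R *: (t a *m phi i j *m g a))); last first.
  apply: eq_bigr=> a _; rewrite -scalemxAr mulmxA inv_eq mulmxDl scalerDr addrC.
  congr (_ + _); case: ifP=> h; last by rewrite mul0mx scaler0.
  have hx := inc_dec h; move: (dec j a) hx => x hx; rewrite -hx /G.
  by rewrite fct_inc natrM -scalemxAl scalerA mulrAC.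
rewrite !big_split /=; congr (_ + _).
rewrite -!big_mkcond; exact: reindex_dec.
Qed.

Lemma Phi_lie i j g : fsupp g ->
  forall e, Phi d t (lie_xd phi i j g) e = lie_xd phi' i j (Phi d t g) e.
Proof.
move=> hg e; apply/eqP; rewrite -subr_eq0; apply/eqP; move: g hg e.
apply: (vanish (U := fun g e => Phi d t (lie_xd phi i j g) e - lie_xd phi' i j (Phi d t g) e)).
  move=> k g hg e /=.
  have E1 : lie_xd phi i j (dx k g) =
      fun e0 => (- (k == i)%:R) *: dx j g e0 + dx k (lie_xd phi i j g) e0.
    by apply: functional_extensionality=> e0; rewrite dx_lie scaleNr addrC addrK.
  have E2 : Phi d t (dx k g) = dx k (Phi d t g).
    by apply: functional_extensionality=> e0; rewrite Phi_dx.
  have E3 : forall A B : exps m -> 'cV[C]_n',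
      dx k (fun e0 => A e0 - B e0) e = dx k A e - dx k B e.
    by move=> A B; rewrite /dx scalerBr.
  by rewrite E1 Phi_linf !Phi_dx E2 E3 dx_lie scaleNr zmod_id.
move=> g hg /=; apply/eqP; rewrite subr_eq0; apply/eqP; exact: Phi_lie_z.
Qed.

End PhiLie.

Lemma mx_ext0 (C : fieldType) p q (A : 'M[C]_(p, q)) :
  (forall v : 'cV[C]_q, A *m v = 0) -> A = 0.
Proof.
move=> H; apply/matrixP=> r s; have := H (delta_mx s 0).
by rewrite -colE=> /matrixP /(_ r 0); rewrite !mxE.
Qed.

Lemma mono0 (C : fieldType) m n (a : exps m) : mono a (0 : 'cV[C]_n) = fun _ => 0.
Proof. by apply: functional_extensionality=> e; rewrite /mono; case: ifP. Qed.

Lemma mulx_dx_same (C : fieldType) m n (r : 'I_m) (h : exps m -> 'cV[C]_n) e :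
  mulx r (dx r h) e = (e r)%:R *: h e.
Proof.
rewrite /mulx /dx; case: (posnP (e r))=> [->|hp]; first by rewrite scale0r.
by rewrite inc_dec // decE eqxx subn1 prednK.
Qed.

Lemma lie_mono (C : fieldType) m n (phi : 'I_m -> 'I_m -> 'M[C]_n) i j b v :
  lie_xd phi i j (mono b v) =
  fun e0 => (b j)%:R *: mono (inc i (dec j b)) v e0 + mono b (phi i j *m v) e0.
Proof.
apply: functional_extensionality=> e0; rewrite /lie_xd; congr (_ + _); last first.
  by rewrite /mono; case: ifP; rewrite ?mulmx0.
rewrite /mulx /dx /mono; case: (posnP (b j))=> [hb|hb].
  rewrite hb scale0r; case: ifP=> // _; case: eqP; rewrite ?scaler0 // => h.
  by move: (inc_pos j (dec i e0)); rewrite h hb.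
case: (posnP (e0 i))=> [he|he].
  case: eqP; rewrite ?scaler0 // => h.
  by move: (inc_pos i (dec j b)); rewrite -h he.
have E : (inc j (dec i e0) == b) = (e0 == inc i (dec j b)).
  apply/eqP/eqP=> h.
    by rewrite -h dec_inc inc_dec.
  by rewrite h dec_inc inc_dec.
rewrite E; case: eqP=> h; last by rewrite !scaler0.
by rewrite h dec_inc decE eqxx subn1 prednK.
Qed.

Section Hsec.
Variables (C : numFieldType) (m n n' : nat).
Variables (phi : 'I_m -> 'I_m -> 'M[C]_n) (phi' : 'I_m -> 'I_m -> 'M[C]_n').
Variables (c c' : C).
Hypothesis Hc : \sum_(r < m) phi r r = c%:M.
Hypothesis Hc' : \sum_(r < m) phi' r r = c'%:M.
Variable T : (exps m -> 'cV[C]_n) -> exps m -> 'cV[C]_n'.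
Hypothesis HB : is_bhom phi phi' T.

Lemma HL : forall (a : C) f g, fsupp f -> fsupp g ->
  forall e, T (fun e0 => a *: f e0 + g e0) e = a *: T f e + T g e.
Proof. by case: HB. Qed.

Lemma Tscale (s : C) f : fsupp f -> forall e, T (fun e0 => s *: f e0) e = s *: T f e.
Proof.
move=> hf e; have := HL s hf (@fsupp0 C m n) e.
rewrite (T0 HL) addr0=> <-; congr (T _ e).
by apply: functional_extensionality=> e0; rewrite addr0.
Qed.

Lemma euler a v : ((deg a)%:R + c - c') *: T (mono a v) (ez m) = 0.
Proof.
have L : forall r f, fsupp f -> T (lie_xd phi r r f) (ez m) = phi' r r *m T f (ez m).
  move=> r f hf; case: HB=> _ _ _ ->//.
  by rewrite /lie_xd /mulx ffunE /= add0r.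
have E : (fun e => \sum_(r <- index_enum 'I_m) 1 *: lie_xd phi r r (mono a v) e) =
         fun e => ((deg a)%:R + c) *: mono a v e.
  apply: functional_extensionality=> e.
  under eq_bigr do rewrite scale1r /lie_xd mulx_dx_same.
  rewrite big_split /= -mulmx_suml Hc mul_scalar_mx -scaler_suml -natr_sum.
  rewrite scalerDl; congr (_ + _); rewrite /mono; case: eqP=> [->|]; rewrite ?scaler0 //.
have := Tsum HL (index_enum 'I_m) (fun _ => 1) (fun r => fsupp_lie phi r r (fsupp_mono a v)) (ez m).
rewrite E Tscale; last by apply: fsupp_mono.
rewrite (eq_bigr (fun r => phi' r r *m T (mono a v) (ez m))); last first.
  by move=> r _ /=; rewrite scale1r L //; apply: fsupp_mono.
rewrite -mulmx_suml Hc' mul_scalar_mx=> /eqP.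
by rewrite -subr_eq0 -scalerBl=> /eqP.
Qed.

Lemma Tmono0 a v : (deg a)%:R + c - c' != 0 -> T (mono a v) (ez m) = 0.
Proof. by move=> h; have /eqP := euler a v; rewrite scaler_eq0 (negbTE h) => /eqP. Qed.

Lemma T_zero_part : ~ (exists d : nat, c' - c = d%:R) ->
  forall f, fsupp f -> forall e, T f e = 0.
Proof.
move=> nd; apply: vanish.
  by move=> k g hg e; case: HB=> _ _ -> //.
move=> g hg; have [s [us hs ->]] := Tdecomp HL hg.
rewrite big1 // => a _; apply: Tmono0; apply/eqP=> h; apply: nd; exists (deg a).
transitivity (((deg a)%:R + c - c') * (-1) + (deg a)%:R); first by ring.
by rewrite h mul0r add0r.
Qed.

Definition tT (a : exps m) : 'M[C]_(n', n) :=
  (fct a)%:R^-1 *: \matrix_(r, k) (T (mono a (delta_mx k 0)) (ez m) r 0).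

Lemma tT_mul a v : (fct a)%:R *: (tT a *m v) = T (mono a v) (ez m).
Proof.
rewrite /tT -scalemxAl scalerA mulfV ?(fct_neq0 C) // scale1r.
have E : mono a v = fun e0 => \sum_(k <- index_enum 'I_n) (v k 0) *: mono a (delta_mx k 0) e0.
  apply: functional_extensionality=> e0; rewrite /mono; case: ifP=> _; last first.
    by rewrite big1 // => k _; rewrite scaler0.
  apply/matrixP=> r s; rewrite (ord1 s) summxE (bigD1 r) //= big1 => [|k hk]; rewrite !mxE.
    by rewrite !eqxx mulr1 addr0.
  by rewrite eq_sym (negbTE hk) mulr0.
rewrite E (Tsum HL) => [|k]; last exact: fsupp_mono.
apply/matrixP=> r s; rewrite (ord1 s) !mxE summxE; apply: eq_bigr=> k _.
by rewrite !mxE mulrC.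
Qed.


Variable d : nat.
Hypothesis Hd : c' - c = d%:R.

Lemma Tmono_deg a v : deg a != d -> T (mono a v) (ez m) = 0.
Proof.
move=> h; apply: Tmono0; rewrite -addrA -opprB Hd subr_eq0 eqr_nat //.
Qed.

Lemma tT_deg a : deg a != d -> tT a = 0.
Proof.
by move=> h; rewrite /tT; apply/matrixP=> r k; rewrite !mxE Tmono_deg // !mxE mulr0.
Qed.

Lemma T_eq_Phi f : fsupp f -> forall e, T f e = Phi d tT f e.
Proof.
move=> hf e; apply/eqP; rewrite -subr_eq0; apply/eqP; move: f hf e.
apply: (vanish (U := fun g e => T g e - Phi d tT g e)).
  move=> k g hg e /=; case: HB=> _ _ HD _.
  by rewrite HD // Phi_dx /dx scalerBr.
move=> g hg /=; apply/eqP; rewrite subr_eq0; apply/eqP.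
have [s [us hs ->]] := Tdecomp HL hg.
rewrite Phi_z; under [RHS]eq_bigr do rewrite tT_mul.
apply: sum_supp=> //; first exact: Sd_uniq.
  move=> a; apply: contraR=> ha.
  have -> : g a = 0 by apply/eqP; apply: contraR ha; apply: hs.
  by rewrite mono0 (T0 HL).
by move=> a; apply: contraR; rewrite mem_Sd=> ha; rewrite Tmono_deg.
Qed.

Lemma tT_inv : is_invariant phi phi' d tT.
Proof.
split; first by move=> a; apply: tT_deg.
move=> i j b.
suff : (fct b)%:R *: tensor_act phi phi' i j tT b = 0.
  by move/eqP; rewrite scaler_eq0 (negbTE (fct_neq0 C b)) => /eqP.
apply: mx_ext0=> v.
have K := HB.
case: K=> _ _ _ /(_ i j (mono b v) (fsupp_mono b v) (ez m)) K.
rewrite lie_mono HL in K; try apply: fsupp_mono.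
rewrite /lie_xd /mulx ffunE /= add0r -!tT_mul -scalemxAr in K.
rewrite /tensor_act /dop_act /hom_act.
case: (posnP (b j))=> [hb|hb].
  rewrite hb scale0r add0r in K.
  by rewrite oppr0 add0r -scalemxAl mulmxBl scalerBr -!mulmxA K subrr.
rewrite -scalemxAl mulmxDl mulmxBl scalerDr scalerBr -!mulmxA -K addrK.
rewrite mulNmx -scalemxAl !scalerA scalerN addrC scalerA; apply/eqP; rewrite subr_eq0; apply/eqP.
congr (_ *: _).
move: (dec j b) (inc_dec hb) => x hx; rewrite -hx !fct_inc incE eqxx addn1.
by rewrite !natrM mulrA [_ * (fct x)%:R]mulrC.
Qed.

End Hsec.

Unset Implicit Arguments.

Theorem mainTheorem9 (C : numClosedFieldType) (m n n' : nat)
  (phi : 'I_m -> 'I_m -> 'M[C]_n) (phi' : 'I_m -> 'I_m -> 'M[C]_n')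
  (c c' : C) :
  is_lm_rep phi -> is_lm_rep phi' ->
  \sum_(r < m) phi r r = c%:M -> \sum_(r < m) phi' r r = c'%:M ->
  (~ (exists d : nat, c' - c = d%:R) ->
     forall T, is_bhom phi phi' T ->
       forall f, fsupp f -> forall e, T f e = 0) /\
  (forall d : nat, c' - c = d%:R ->
     exists Phi : (exps m -> 'M[C]_(n', n)) ->
                  (exps m -> 'cV[C]_n) -> (exps m -> 'cV[C]_n'),
       [/\ forall t, is_invariant phi phi' d t -> is_bhom phi phi' (Phi t),
           forall (a : C) t1 t2, is_invariant phi phi' d t1 -> is_invariant phi phi' d t2 ->
             forall f, fsupp f -> forall e,
               Phi (fun b => a *: t1 b + t2 b) f e = a *: Phi t1 f e + Phi t2 f e,
           forall t1 t2, is_invariant phi phi' d t1 -> is_invariant phi phi' d t2 ->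
             (forall f, fsupp f -> forall e, Phi t1 f e = Phi t2 f e) ->
             forall b, t1 b = t2 b
         & forall T, is_bhom phi phi' T ->
             exists2 t, is_invariant phi phi' d t &
               forall f, fsupp f -> forall e, T f e = Phi t f e]).
Proof.
move=> _ _ Hc Hc'; split.
  move=> nd T HB f hf e; exact: (T_zero_part Hc Hc' HB nd hf).
move=> d Hd; exists (Phi d); split.
- move=> t [_ Hinv]; split.
  + by move=> f hf; apply: Phi_fsupp.
  + by move=> a f g _ _ e; apply: Phi_linf.
  + by move=> k f _ e; apply: Phi_dx.
  + by move=> i j f hf e; apply: Phi_lie.
- by move=> a t1 t2 _ _ f _ e; apply: Phi_lint.
- move=> t1 t2 [h1 _] [h2 _] H b.
  case: (eqVneq (deg b) d)=> hb; last by rewrite h1 ?h2.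
  apply/eqP; rewrite -subr_eq0; apply/eqP; apply: mx_ext0=> v.
  have := H (mono b v) (fsupp_mono b v) (ez m).
  rewrite !Phi_mono0 hb eqxx=> /(scalerI (fct_neq0 C b)) E.
  by rewrite mulmxBl E subrr.
- move=> T HB; exists (tT T); first exact: (tT_inv Hc Hc' HB Hd).
  by move=> f hf e; apply: (T_eq_Phi Hc Hc' HB Hd).
Qed.
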